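(* Let ${\cal C}$ be a semi-degenerate congruence-modular variety and $A\in{\cal C}$ a semiprime algebra. Then ${\rm Con}(A)$ is a strongly Stone lattice iff ${\rm Con}(A)/\equiv_A$ is a strongly Stone lattice.
   Context: ${\cal C}$ semi-degenerate: no nontrivial member has a one-element subalgebra. ${\rm Con}(A)$: congruence lattice with bounds $\Delta_A,\nabla_A=A^2$; $[\cdot,\cdot]_A$: modular commutator. A congruence $\phi\ne\nabla_A$ is prime if $[\theta,\zeta]_A\subseteq\phi$ implies $\theta\subseteq\phi$ or $\zeta\subseteq\phi$. $\rho_A(\theta)$: intersection of all prime congruences containing $\theta$. $A$ semiprime: $\rho_A(\Delta_A)=\Delta_A$. $\theta\equiv_A\zeta$ iff $\rho_A(\theta)=\rho_A(\zeta)$; ${\rm Con}(A)/\equiv_A$ is the quotient bounded lattice. A bounded lattice $L$ is strongly Stone if for every $U\subseteq L$ there is a complemented $e\in L$ with $\{x\in L\mid x\wedge u=0\ \forall u\in U\}=\{x\mid x\le e\}$. *)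

(* Defs.v *)
From mathcomp Require Import all_boot.
Set Implicit Arguments.
Unset Strict Implicit.
Unset Printing Implicit Defensive.

Record signature := Signature { op_sym : Type; arity : op_sym -> nat }.

Record algebra (S : signature) := Algebra {
  carrier :> Type;
  interp : forall f : op_sym S, ('I_(arity f) -> carrier) -> carrier }.

Inductive term (S : signature) : Type :=
  | Var : nat -> term S
  | App : forall f : op_sym S, ('I_(arity f) -> term S) -> term S.

Fixpoint eval (S : signature) (A : algebra S) (v : nat -> A) (t : term S) : A :=
  match t with
  | Var n => v n
  | App f args => @interp S A f (fun i => @eval S A v (args i))
  end.

(* A variety is given by a set of identities; its members are the algebras
   satisfying them (equational class; = HSP-closed class by Birkhoff). *)
Definition identities (S : signature) := term S -> term S -> Prop.

Definition models (S : signature) (E : identities S) (A : algebra S) : Prop :=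
  forall s t, E s t -> forall v : nat -> A, @eval S A v s = @eval S A v t.

Definition rel (T : Type) := T -> T -> Prop.

Definition subrel (T : Type) (r s : rel T) : Prop := forall x y, r x y -> s x y.
Definition releq (T : Type) (r s : rel T) : Prop := forall x y, r x y <-> s x y.

Definition is_congruence (S : signature) (A : algebra S) (th : rel A) : Prop :=
  (forall x, th x x) /\ (forall x y, th x y -> th y x) /\
  (forall x y z, th x y -> th y z -> th x z) /\
  (forall (f : op_sym S) (a b : 'I_(arity f) -> A),
      (forall i, th (a i) (b i)) -> th (@interp S A f a) (@interp S A f b)).

Definition cg_bot (S : signature) (A : algebra S) : rel A := fun x y => x = y.
Definition cg_top (S : signature) (A : algebra S) : rel A := fun _ _ => True.
Definition cg_meet (S : signature) (A : algebra S) (th ze : rel A) : rel A :=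
  fun x y => th x y /\ ze x y.
Definition cg_join (S : signature) (A : algebra S) (th ze : rel A) : rel A :=
  fun x y => forall d, @is_congruence S A d ->
    (forall a b, th a b \/ ze a b -> d a b) -> d x y.

Definition congruence_modular (S : signature) (E : identities S) : Prop :=
  forall B : algebra S, models E B ->
  forall al be ga : rel B,
    @is_congruence S B al -> @is_congruence S B be -> @is_congruence S B ga ->
    subrel al ga ->
    subrel (cg_meet (cg_join al be) ga) (cg_join al (cg_meet be ga)).

Definition one_elt_subalgebra (S : signature) (B : algebra S) (b : B) : Prop :=
  forall (f : op_sym S) (a : 'I_(arity f) -> B),
    (forall i, a i = b) -> @interp S B f a = b.

Definition semi_degenerate (S : signature) (E : identities S) : Prop :=
  forall B : algebra S, models E B ->
    (exists x y : B, x <> y) -> ~ (exists b : B, one_elt_subalgebra b).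

Definition sel (T : Type) (P : nat -> bool) (a c : nat -> T) : nat -> T :=
  fun k => if P k then a k else c k.

Definition centralizes (S : signature) (A : algebra S) (al be de : rel A) : Prop :=
  forall (t : term S) (P : nat -> bool) (a b c d : nat -> A),
    (forall k, al (a k) (b k)) -> (forall k, be (c k) (d k)) ->
    de (@eval S A (sel P a c) t) (@eval S A (sel P a d) t) ->
    de (@eval S A (sel P b c) t) (@eval S A (sel P b d) t).

(* [al, be]_A: the least congruence de with C(al, be; de); in a
   congruence-modular variety this is the modular commutator. *)
Definition commutator (S : signature) (A : algebra S) (al be : rel A) : rel A :=
  fun x y => forall de, @is_congruence S A de -> centralizes al be de -> de x y.

Definition prime_cg (S : signature) (A : algebra S) (phi : rel A) : Prop :=
  @is_congruence S A phi /\ ~ releq phi (@cg_top S A) /\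
  forall th ze, @is_congruence S A th -> @is_congruence S A ze ->
    subrel (commutator th ze) phi -> subrel th phi \/ subrel ze phi.

Definition rho (S : signature) (A : algebra S) (th : rel A) : rel A :=
  fun x y => forall phi, prime_cg phi -> subrel th phi -> phi x y.

Definition semiprime (S : signature) (A : algebra S) : Prop :=
  releq (rho (@cg_bot S A)) (@cg_bot S A).

Definition cg_equiv (S : signature) (A : algebra S) (th ze : rel A) : Prop :=
  releq (rho th) (rho ze).

(* A bounded lattice presented by a carrier predicate on T, an equivalence
   eqv (equality of the lattice), operations meet/join and bounds bot/top.
   x <= e is x /\ e = x.  A subset U of the lattice is given by a set of
   representatives. *)
Definition strongly_stone (T : Type) (car : T -> Prop) (eqv : T -> T -> Prop)
    (meet join : T -> T -> T) (bot top : T) : Prop :=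
  forall U : T -> Prop, (forall u, U u -> car u) ->
  exists e, car e /\
    (exists f, car f /\ eqv (meet e f) bot /\ eqv (join e f) top) /\
    (forall x, car x ->
       ((forall u, U u -> eqv (meet x u) bot) <-> eqv (meet x e) x)).

Definition Con_strongly_stone (S : signature) (A : algebra S) : Prop :=
  strongly_stone (@is_congruence S A) (@releq A)
    (@cg_meet S A) (@cg_join S A) (@cg_bot S A) (@cg_top S A).

(* Con(A)/==_A is strongly Stone: elements are classes [th], with
   [th] /\ [ze] = [th /\ ze], [th] \/ [ze] = [th \/ ze], 0 = [Delta], 1 = [Nabla]. *)
Definition Con_quot_strongly_stone (S : signature) (A : algebra S) : Prop :=
  strongly_stone (@is_congruence S A) (@cg_equiv S A)
    (@cg_meet S A) (@cg_join S A) (@cg_bot S A) (@cg_top S A).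

(* Main.v *)
Require Import Defs.
From mathcomp Require Import all_boot.
From mathcomp Require boolp classical_sets.
From Stdlib Require Import FunctionalExtensionality PropExtensionality ProofIrrelevance ClassicalEpsilon Classical.
Set Implicit Arguments.
Unset Strict Implicit.
Unset Printing Implicit Defensive.


Notation subr := Defs.subrel.

Section Basics.
Variable S : signature.

Lemma cong_eval (B : algebra S) (th : B -> B -> Prop) : is_congruence th ->
  forall v w : nat -> B, (forall k, th (v k) (w k)) -> forall t, th (eval v t) (eval w t).
Proof.
move=> [r [s [tr c]]] v w H; elim => [n|f args IH] /=; [exact: H | apply: c; exact: IH].
Qed.

Lemma meet_cong (B : algebra S) (a b : B -> B -> Prop) :
  is_congruence a -> is_congruence b -> is_congruence (cg_meet a b).
Proof.
move=> [r1 [s1 [t1 c1]]] [r2 [s2 [t2 c2]]]; split; [|split; [|split]].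
- by move=> x; split.
- by move=> x y [h1 h2]; split; auto.
- by move=> x y z [h1 h2] [h3 h4]; split; eauto.
- move=> f a0 b0 H; split; [apply: c1 | apply: c2] => i; case: (H i).
  by []. by [].
Qed.

Lemma join_cong (B : algebra S) (a b : B -> B -> Prop) : is_congruence (cg_join a b).
Proof.
split; [|split; [|split]].
- move=> x d hd _; case: hd => r _; exact: r.
- move=> x y H d hd hab; case: (hd) => _ [s _]; apply: s; exact: H.
- move=> x y z H1 H2 d hd hab; case: (hd) => _ [_ [t _]]; exact: t (H1 d hd hab) (H2 d hd hab).
- move=> f a0 b0 H d hd hab; case: (hd) => _ [_ [_ c]]; apply: c => i; exact: H.
Qed.

Lemma join_l (B : algebra S) (a b : B -> B -> Prop) x y : a x y -> cg_join a b x y.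
Proof. by move=> h d _ hab; apply: hab; left. Qed.
Lemma join_r (B : algebra S) (a b : B -> B -> Prop) x y : b x y -> cg_join a b x y.
Proof. by move=> h d _ hab; apply: hab; right. Qed.
Lemma join_min (B : algebra S) (a b d : B -> B -> Prop) : is_congruence d ->
  subr a d -> subr b d -> subr (cg_join a b) d.
Proof. by move=> hd ha hb x y H; apply: H => // u v [h|h]; auto. Qed.

Lemma top_cong (B : algebra S) : is_congruence (@cg_top S B).
Proof. by do !split. Qed.
Lemma bot_cong (B : algebra S) : is_congruence (@cg_bot S B).
Proof.
split; [|split; [|split]]; rewrite /cg_bot //.
- by move=> x y z -> ->.
- by move=> f a b H; congr interp; apply: functional_extensionality.
Qed.

Definition pow (B : algebra S) (I : Type) : algebra S :=
  @Algebra S (I -> B) (fun f a i => interp (fun k => a k i)).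

Lemma eval_pow (B : algebra S) I (v : nat -> pow B I) t i :
  eval v t i = eval (fun k => v k i) t.
Proof.
elim: t i => [n|f args IH] i //=.
by congr interp; apply: functional_extensionality => k; rewrite IH.
Qed.

Lemma models_pow E (B : algebra S) I : models E B -> models E (pow B I).
Proof.
move=> HB s t Hst v; apply: functional_extensionality => i.
by rewrite !eval_pow; apply: HB.
Qed.

Definition closed_pred (B : algebra S) (X : B -> Prop) :=
  forall f (a : 'I_(arity f) -> B), (forall i, X (a i)) -> X (interp a).

Definition sub (B : algebra S) (X : B -> Prop) (HX : closed_pred X) : algebra S :=
  @Algebra S {x | X x}
    (fun f a => exist _ (interp (fun i => proj1_sig (a i))) (HX f _ (fun i => proj2_sig (a i)))).

Lemma sval_inj (B : Type) (X : B -> Prop) (x y : {z | X z}) : proj1_sig x = proj1_sig y -> x = y.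
Proof. by case: x => x hx; case: y => y hy /= e; subst y; rewrite (proof_irrelevance _ hx hy). Qed.

Lemma eval_sub (B : algebra S) X (HX : closed_pred X) (v : nat -> sub HX) t :
  proj1_sig (eval v t) = @eval S B (fun k => proj1_sig (v k)) t.
Proof.
elim: t => [n|f args IH] //=.
by congr interp; apply: functional_extensionality => k; rewrite IH.
Qed.

Lemma models_sub E (B : algebra S) X (HX : closed_pred X) : models E B -> models E (@sub B X HX).
Proof. by move=> HB s t Hst v; apply: sval_inj; rewrite !eval_sub; apply: HB. Qed.

End Basics.

Section Quot.
Variables (S : signature) (B : algebra S) (th : B -> B -> Prop) (Hth : is_congruence th).

Definition qcar := {X : B -> Prop | exists x, X = th x}.
Definition rep (X : qcar) : B := proj1_sig (constructive_indefinite_description _ (proj2_sig X)).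
Lemma rep_spec (X : qcar) : proj1_sig X = th (rep X).
Proof. exact: (proj2_sig (constructive_indefinite_description _ (proj2_sig X))). Qed.
Definition cls (x : B) : qcar := exist _ (th x) (ex_intro _ x erefl).

Lemma cls_eq x y : th x y -> cls x = cls y.
Proof.
case: Hth => [r [s [t _]]] h; apply: sval_inj => /=.
apply: functional_extensionality => z; apply: propositional_extensionality; split; eauto.
Qed.

Lemma cls_inj x y : cls x = cls y -> th x y.
Proof.
case: Hth => [r _] e; have: proj1_sig (cls x) y = proj1_sig (cls y) y by rewrite e.
by rewrite /= => ->; apply: r.
Qed.

Lemma cls_rep X : cls (rep X) = X.
Proof. by apply: sval_inj; rewrite /= -rep_spec. Qed.

Lemma rep_cls x : th (rep (cls x)) x.
Proof. by apply: cls_inj; rewrite cls_rep. Qed.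

Definition quot : algebra S := @Algebra S qcar (fun f a => cls (interp (fun i => rep (a i)))).

Lemma eval_quot (v : nat -> quot) t : eval v t = cls (@eval S B (fun k => rep (v k)) t).
Proof.
elim: t => [n|f args IH] /=; first by rewrite cls_rep.
apply: cls_eq; case: Hth => [_ [_ [_ c]]]; apply: c => i.
rewrite IH; exact: rep_cls.
Qed.

Lemma models_quot E : models E B -> models E quot.
Proof. by move=> HB s t Hst v; rewrite !eval_quot; congr cls; apply: HB. Qed.

End Quot.


Section Pairs.
Variables (S : signature) (B : algebra S) (al : B -> B -> Prop) (Hal : is_congruence al).

Definition alpred (p : pow B bool) : Prop := al (p true) (p false).
Lemma alpred_closed : closed_pred alpred.
Proof. case: Hal => [_ [_ [_ c]]] f a H; rewrite /alpred /=; apply: c => i; exact: H. Qed.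

Definition Alg : algebra S := sub alpred_closed.
Definition p1 (P : Alg) : B := proj1_sig P true.
Definition p2 (P : Alg) : B := proj1_sig P false.
Lemma pal (P : Alg) : al (p1 P) (p2 P).
Proof. exact: proj2_sig P. Qed.
Definition mkP (x y : B) (h : al x y) : Alg :=
  exist alpred (fun b : bool => if b then x else y) h.
Definition Pdiag (x : B) : Alg := mkP (proj1 Hal x).

Lemma elem_eq (P Q : Alg) : p1 P = p1 Q -> p2 P = p2 Q -> P = Q.
Proof.
move=> e1 e2; apply: sval_inj; apply: functional_extensionality; case; [exact e1 | exact e2].
Qed.

Lemma eval_p1 (V : nat -> Alg) t : p1 (eval V t) = @eval S B (fun k => p1 (V k)) t.
Proof. by rewrite /p1 eval_sub eval_pow. Qed.
Lemma eval_p2 (V : nat -> Alg) t : p2 (eval V t) = @eval S B (fun k => p2 (V k)) t.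
Proof. by rewrite /p2 eval_sub eval_pow. Qed.

Lemma models_Alg E : models E B -> models E Alg.
Proof. by move=> HB; apply: models_sub; apply: models_pow. Qed.

Definition coordR (g1 g2 : B -> B -> Prop) (P Q : Alg) : Prop := g1 (p1 P) (p1 Q) /\ g2 (p2 P) (p2 Q).

Lemma coordR_cong g1 g2 : is_congruence g1 -> is_congruence g2 -> is_congruence (coordR g1 g2).
Proof.
move=> [r1 [s1 [t1 c1]]] [r2 [s2 [t2 c2]]]; rewrite /coordR; split; [|split; [|split]].
- by move=> x; split.
- by move=> x y [h1 h2]; split; auto.
- by move=> x y z [h1 h2] [h3 h4]; split; eauto.
- move=> f a0 b0 H; split; [apply: c1 | apply: c2] => i; case: (H i) => //.
Qed.

Definition pairval (v w : nat -> B) (h : forall k, al (v k) (w k)) : nat -> Alg :=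
  fun k => mkP (h k).

End Pairs.

Lemma shifting (S : signature) (E : identities S) (B : algebra S) :
  congruence_modular E -> models E B ->
  forall al be ga : B -> B -> Prop, is_congruence al -> is_congruence be -> is_congruence ga ->
  subr (cg_meet al be) ga ->
  forall a b c d, be a b -> be c d -> al a c -> al b d -> ga a c -> ga b d.
Proof.
move=> HCM HB al be ga Hal Hbe Hga Hm a b c d ab cd ac bd gac.
pose eta0 := @coordR _ _ _ Hal (@cg_bot S B) (@cg_top S B).
pose bh := @coordR _ _ _ Hal be be.
pose gh := @coordR _ _ _ Hal ga ga.
have Ceta0 : is_congruence eta0 by apply: coordR_cong; [apply: bot_cong | apply: top_cong].
have Cbh : is_congruence bh by apply: coordR_cong.
have Cgh : is_congruence gh by apply: coordR_cong.
have Cm : is_congruence (cg_meet eta0 gh) by apply: meet_cong.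
have HA : models E (Alg Hal) := models_Alg HB.
have H0 := HCM _ HA (cg_meet eta0 gh) bh eta0 Cm Cbh Ceta0 (fun x y h => proj1 h).
case: (Hal) => ra [sa [ta _]]; case: (Hbe) => rb [sb [tb _]]; case: (Hga) => rg [sg [tg _]].
pose Pbb := Pdiag Hal b; pose Pbd := mkP Hal bd; pose Paa := Pdiag Hal a; pose Pac := mkP Hal ac.
have H := H0 Pbb Pbd.
have [H1 H2] : cg_meet eta0 gh Pbb Pbd.
  apply: (join_min Cm _ _ (H _)).
  - by [].
  - move=> P Q [[bP bQ] [e _]]; split; first by split.
    split; first by rewrite e; apply: rg.
    apply: Hm; split; last by [].
    apply: ta (sa _ _ (pal P)) _; rewrite /cg_bot in e; rewrite e; exact: pal.
  - split; last by split; rewrite /cg_bot.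
    apply: (proj1 (proj2 (proj2 (join_cong _ _)))) (_ : cg_join _ _ Pbb Paa) _.
    + by apply: join_r; split; apply: sb.
    apply: (proj1 (proj2 (proj2 (join_cong _ _)))) (_ : cg_join _ _ Paa Pac) _.
    + by apply: join_l; split; split => //; apply: rg.
    by apply: join_r; split.
by case: H2.
Qed.


Section Syn.
Variable S : signature.

Fixpoint subst (s : nat -> term S) (t : term S) : term S :=
  match t with
  | Var n => s n
  | App f args => App (fun i => subst s (args i))
  end.

Lemma eval_subst (B : algebra S) (w : nat -> B) s t :
  eval w (subst s t) = eval (fun j => eval w (s j)) t.
Proof.
elim: t => [n|f args IH] //=.
by congr interp; apply: functional_extensionality => i; rewrite IH.
Qed.

Definition upd (B : Type) (v : nat -> B) (k : nat) (P : B) : nat -> B :=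
  fun j => if j == k then P else v j.

Definition syn (B : algebra S) (X : B -> Prop) (P Q : B) : Prop :=
  forall t (v : nat -> B) k, X (eval (upd v k P) t) <-> X (eval (upd v k Q) t).

Lemma syn_step (B : algebra S) (X : B -> Prop) f (g1 g2 : 'I_(arity f) -> B) (i0 : 'I_(arity f)) :
  (forall i, i != i0 -> g1 i = g2 i) -> syn X (g1 i0) (g2 i0) -> syn X (interp g1) (interp g2).
Proof.
move=> Heq Hs t v k.
set n := arity f.
pose sg := fun j => if j == k then App (fun i : 'I_n => if i == i0 then Var S 0 else Var S (i.+1))
                     else Var S (n + j).+1.
pose w0 := fun j => match j with 0 => v k | j'.+1 => oapp g1 (v (j' - n)) (insub j') end.
have key : forall h, eval (upd w0 0 h) (subst sg t) =
   eval (upd v k (interp (fun i => if i == i0 then h else g1 i))) t.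
  move=> h; rewrite eval_subst; congr eval; apply: functional_extensionality => j.
  rewrite /sg /upd; case: (j == k) => /=.
  - congr interp; apply: functional_extensionality => i; case: (i == i0) => //=.
    by rewrite /w0 valK.
  - rewrite /w0 insubN; first by rewrite addKn.
    by rewrite -leqNgt leq_addr.
have e1 : (fun i => if i == i0 then g1 i0 else g1 i) = g1.
  by apply: functional_extensionality => i; case: eqP => [->|].
have e2 : (fun i => if i == i0 then g2 i0 else g1 i) = g2.
  apply: functional_extensionality => i; case: eqP => [->|/eqP ne] //; exact: Heq.
by rewrite -{1}e1 -e2 -!key; apply: Hs.
Qed.

Lemma syn_cong (B : algebra S) (X : B -> Prop) : is_congruence (syn X).
Proof.
split; [|split; [|split]].
- by move=> x t v k.
- by move=> x y H t v k; split; apply H.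
- by move=> x y z H1 H2 t v k; split => h; [apply/H2/H1 | apply/H1/H2].
- move=> f a b H.
  pose mix m := fun i : 'I_(arity f) => if (i < m)%N then b i else a i.
  have Hm : forall m, syn X (interp a) (interp (mix m)).
    elim => [|m IH].
    + have -> : mix 0 = a by apply: functional_extensionality.
      by move=> t v k.
    + case: (ltnP m (arity f)) => hm.
      * pose i0 := Ordinal hm.
        move=> t v k; rewrite (IH t v k).
        apply: (@syn_step B X f (mix m) (mix m.+1) i0).
        - move=> i /eqP ne; rewrite /mix ltnS (leq_eqVlt i m).
          by have -> : (nat_of_ord i == m) = false by apply/eqP => e; apply: ne; apply: val_inj.
        - by rewrite /mix /= ltnn ltnSn; apply: H.
      * have -> : mix m.+1 = mix m.
          apply: functional_extensionality => i; rewrite /mix.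
          have h1 := ltn_ord i.
          by rewrite (leq_trans h1 hm) (leq_trans h1 (leq_trans hm (leqnSn _))).
        exact: IH.
  have -> : b = mix (arity f) by apply: functional_extensionality => i; rewrite /mix ltn_ord.
  exact: Hm.
Qed.

Lemma syn_X (B : algebra S) (X : B -> Prop) P Q : syn X P Q -> (X P <-> X Q).
Proof. by move=> H; have := H (Var S 0) (fun _ => P) 0. Qed.

End Syn.


Section FM.
Variables (S : signature) (A : algebra S) (al : A -> A -> Prop) (Hal : is_congruence al).

Definition Delta (be : A -> A -> Prop) (P Q : Alg Hal) : Prop :=
  forall R : Alg Hal -> Alg Hal -> Prop, is_congruence R ->
    (forall x y, be x y -> R (Pdiag Hal x) (Pdiag Hal y)) -> R P Q.

Lemma Delta_cong be : is_congruence (Delta be).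
Proof.
split; [|split; [|split]].
- move=> x R hR _; case: hR => r _; exact: r.
- move=> x y H R hR hg; case: (hR) => _ [s _]; apply: s; exact: H.
- move=> x y z H1 H2 R hR hg; case: (hR) => _ [_ [t _]]; exact: t (H1 R hR hg) (H2 R hR hg).
- move=> f a0 b0 H R hR hg; case: (hR) => _ [_ [_ c]]; apply: c => i; exact: H.
Qed.

Lemma Delta_gen be x y : be x y -> Delta be (Pdiag Hal x) (Pdiag Hal y).
Proof. by move=> h R _ hg; apply: hg. Qed.

Definition Dset (de : A -> A -> Prop) (P : Alg Hal) : Prop := de (p1 P) (p2 P).

Definition FMle be de := forall P Q : Alg Hal, Delta be P Q -> p1 P = p2 P -> p1 P = p1 Q ->
  de (p1 Q) (p2 Q).

Lemma Pdiag_hom f (a : 'I_(arity f) -> A) :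
  interp (fun i => Pdiag Hal (a i)) = Pdiag Hal (interp a).
Proof. by apply: elem_eq. Qed.

Lemma syn_diag_cong (X : Alg Hal -> Prop) :
  is_congruence (fun x y => syn X (Pdiag Hal x) (Pdiag Hal y)).
Proof.
case: (syn_cong X) => r [s [t c]]; split; [|split; [|split]].
- by move=> x; apply: r.
- by move=> x y; apply: s.
- by move=> x y z; apply: t.
- by move=> f a b H; rewrite -!Pdiag_hom; apply: c.
Qed.

Lemma GEN be de : is_congruence be -> centralizes be al de ->
  forall x y, be x y -> syn (Dset de) (Pdiag Hal x) (Pdiag Hal y).
Proof.
move=> [_ [sb _]] HC x y bxy t v k.
have E1 : forall z, p1 (eval (upd v k (Pdiag Hal z)) t) =
    eval (sel (fun j => j == k) (fun _ => z) (fun j => p1 (v j))) t.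
  move=> z; rewrite eval_p1; congr eval; apply: functional_extensionality => j.
  by rewrite /upd /sel; case: (j == k).
have E2 : forall z, p2 (eval (upd v k (Pdiag Hal z)) t) =
    eval (sel (fun j => j == k) (fun _ => z) (fun j => p2 (v j))) t.
  move=> z; rewrite eval_p2; congr eval; apply: functional_extensionality => j.
  by rewrite /upd /sel; case: (j == k).
have Hcd : forall j, al (p1 (v j)) (p2 (v j)) by move=> j; apply: pal.
rewrite /Dset !E1 !E2; split; apply: HC => // j; exact: sb.
Qed.

Lemma FM_of_syn be de : (forall x, de x x) ->
  (forall x y, be x y -> syn (Dset de) (Pdiag Hal x) (Pdiag Hal y)) -> FMle be de.
Proof.
move=> rde Hg P Q HD e1 _.
have HS : syn (Dset de) P Q by apply: HD; [apply: syn_cong | exact: Hg].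
have := syn_X HS; rewrite /Dset -e1 => [[h _]]; exact: h.
Qed.

Lemma KEY E : congruence_modular E -> models E A ->
  forall be de, is_congruence be -> is_congruence de -> FMle be de -> centralizes al be de.
Proof.
move=> HCM HA be de Hbe Hde HF t P a b c d Hab Hcd Hxy.
case: (Hal) => ral [sal [tal _]]; case: (Hde) => rde [sde [tde _]].
have HAA : models E (Alg Hal) by apply: models_Alg.
have h1 : forall k, al (sel P a c k) (sel P b c k) by move=> k; rewrite /sel; case: (P k).
have h2 : forall k, al (sel P a d k) (sel P b d k) by move=> k; rewrite /sel; case: (P k).
pose Q1 := eval (pairval Hal h1) t; pose Q2 := eval (pairval Hal h2) t.
have eQ1a : p1 Q1 = eval (sel P a c) t by rewrite /Q1 eval_p1.
have eQ1b : p2 Q1 = eval (sel P b c) t by rewrite /Q1 eval_p2.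
have eQ2a : p1 Q2 = eval (sel P a d) t by rewrite /Q2 eval_p1.
have eQ2b : p2 Q2 = eval (sel P b d) t by rewrite /Q2 eval_p2.
have DQ : Delta be Q1 Q2.
  apply: (cong_eval (Delta_cong be)) => k.
  case e: (P k).
  - have -> : pairval Hal h1 k = pairval Hal h2 k by apply: elem_eq; rewrite /p1 /p2 /= /sel e.
    by case: (Delta_cong be) => r _; apply: r.
  - have -> : pairval Hal h1 k = Pdiag Hal (c k) by apply: elem_eq; rewrite /p1 /p2 /= /sel e.
    have -> : pairval Hal h2 k = Pdiag Hal (d k) by apply: elem_eq; rewrite /p1 /p2 /= /sel e.
    exact: Delta_gen.
have bxy : be (eval (sel P a c) t) (eval (sel P a d) t).
  apply: (cong_eval Hbe) => k; rewrite /sel; case: (P k) => //.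
  by case: Hbe => r _; apply: r.
have sub1 : forall P0 Q0 : Alg Hal, Delta be P0 Q0 -> p1 P0 = p1 Q0 -> de (p2 P0) (p2 Q0).
  move=> P0 Q0 HD e.
  have hv : al (p2 P0) (p2 Q0).
    apply: tal (sal _ _ (pal P0)) _; rewrite e; exact: pal.
  pose b1 := Pdiag Hal (p2 P0); pose d1 := mkP Hal hv.
  have Ce0 : is_congruence (@coordR _ _ _ Hal (@cg_bot S A) (@cg_top S A))
    by apply: coordR_cong; [apply: bot_cong | apply: top_cong].
  have Ce1 : is_congruence (@coordR _ _ _ Hal (@cg_top S A) (@cg_bot S A))
    by apply: coordR_cong; [apply: top_cong | apply: bot_cong].
  have := @shifting S E (Alg Hal) HCM HAA _ _ _ Ce0 Ce1 (Delta_cong be) _ P0 b1 Q0 d1.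
  move=> /(_ _ _ _ _ _ HD) Hsh.
  have HD1 : Delta be b1 d1.
    apply: Hsh.
    - move=> X Y [[e1 _] [_ e2]]; have -> : X = Y by apply: elem_eq.
      by case: (Delta_cong be) => r _; apply: r.
    - by split.
    - by split.
    - by split.
    - by split.
  exact: (HF b1 d1 HD1).
have Cdh : is_congruence (@coordR _ _ _ Hal de de) by apply: coordR_cong.
have Ce0 : is_congruence (@coordR _ _ _ Hal (@cg_bot S A) (@cg_top S A))
    by apply: coordR_cong; [apply: bot_cong | apply: top_cong].
have Hsh := @shifting S E (Alg Hal) HCM HAA _ _ _ (Delta_cong be) Ce0 Cdh.
have := Hsh _ (Pdiag Hal (eval (sel P a c) t)) Q1 (Pdiag Hal (eval (sel P a d) t)) Q2.
case.
- move=> X Y [HD [e _]]; split; first by rewrite e; apply: rde.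
  exact: sub1.
- by split => //; rewrite eQ1a.
- by split => //; rewrite eQ2a.
- exact: Delta_gen.
- exact: DQ.
- by split.
- by rewrite eQ1b eQ2b.
Qed.

End FM.

Lemma C_self (S : signature) (A : algebra S) (phi be : A -> A -> Prop) :
  is_congruence phi -> centralizes phi be phi.
Proof.
move=> Hp t P a b c d Hab Hcd H.
case: (Hp) => r [s [tr _]].
have E : forall u, phi (eval (sel P b u) t) (eval (sel P a u) t).
  move=> u; apply: (cong_eval Hp) => k; rewrite /sel; case: (P k) => //; exact: s.
apply: (tr _ _ _ (E c)); apply: (tr _ _ _ H); apply: s; exact: E.
Qed.

Lemma SD (S : signature) (E : identities S) (A : algebra S) :
  semi_degenerate E -> models E A -> forall phi : A -> A -> Prop, is_congruence phi ->
  forall a b, ~ phi a b ->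
  (forall x y, syn (@Dset S A _ (top_cong A) phi) (Pdiag (top_cong A) x) (Pdiag (top_cong A) y)) ->
  False.
Proof.
move=> HSD HA phi Hp a b nab Hall.
pose X := @Dset S A _ (top_cong A) phi.
have HS := syn_cong X.
have HQ : models E (quot (syn X)) := models_quot HS (@models_Alg _ _ _ (top_cong A) E HA).
apply: (HSD _ HQ).
- exists (cls (syn X) (Pdiag (top_cong A) a)).
  exists (cls (syn X) (@mkP S A _ (top_cong A) a b I)).
  move=> e; have := syn_X (cls_inj HS e); rewrite /X /Dset /p1 /p2 /= => [[h _]].
  apply: nab; apply: h; by case: Hp.
- exists (cls (syn X) (Pdiag (top_cong A) a)) => f ar Har.
  apply: (cls_eq HS).
  case: (HS) => _ [_ [tr c]].
  have h1 : syn X (interp (fun i => @rep _ _ (syn X) (ar i))) (interp (fun _ : 'I_(arity f) => Pdiag (top_cong A) a)).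
    apply: c => i; rewrite Har; exact: rep_cls.
  apply: (tr _ _ _ h1).
  rewrite Pdiag_hom; exact: Hall.
Qed.


Lemma comm_cong (S : signature) (A : algebra S) (th ze : A -> A -> Prop) :
  is_congruence (commutator th ze).
Proof.
split; [|split; [|split]].
- move=> x d hd _; case: hd => r _; exact: r.
- move=> x y H d hd hc; case: (hd) => _ [s _]; apply: s; exact: H.
- move=> x y z H1 H2 d hd hc; case: (hd) => _ [_ [t _]]; exact: t (H1 d hd hc) (H2 d hd hc).
- move=> f a0 b0 H d hd hc; case: (hd) => _ [_ [_ c]]; apply: c => i; exact: H.
Qed.

Lemma comm_central (S : signature) (A : algebra S) (th ze : A -> A -> Prop) :
  centralizes th ze (commutator th ze).
Proof.
move=> t P a b c d Hab Hcd H de hd hc.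
exact: (hc t P a b c d Hab Hcd (H de hd hc)).
Qed.

Lemma max_prime (S : signature) (E : identities S) (A : algebra S) :
  congruence_modular E -> semi_degenerate E -> models E A ->
  forall phi : A -> A -> Prop, is_congruence phi -> (exists a b, ~ phi a b) ->
  (forall psi, is_congruence psi -> subr phi psi -> (exists a b, ~ psi a b) -> subr psi phi) ->
  prime_cg phi.
Proof.
move=> HCM HSD HA phi Hp [a0 [b0 nab]] Hmax.
split; first exact: Hp.
split; first by move=> H; apply: nab; apply/H.
move=> th ze Hth Hze Hc.
have topj : forall g, is_congruence g -> ~ subr g phi -> forall x y, cg_join g phi x y.
  move=> g Hg ng; apply: NNPP => H.
  have [x Hx] := not_all_ex_not _ _ H.
  have [y Hy] := not_all_ex_not _ _ Hx.
  apply: ng => u v h.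
  have HH := Hmax (cg_join g phi) (join_cong _ _) (fun p q hp => join_r hp) (ex_intro _ x (ex_intro _ y Hy)).
  apply: HH; exact: join_l.
case: (classic (subr th phi)) => [h|nth]; first by left.
case: (classic (subr ze phi)) => [h|nze]; first by right.
exfalso.
have [rp [sp [tp _]]] := Hp.
have F1 : FMle Hze th phi.
  have := @FM_of_syn S A ze Hze th (commutator th ze) (proj1 (@comm_cong S A th ze))
    (@GEN S A ze Hze th (commutator th ze) Hth (@comm_central S A th ze)).
  move=> H; rewrite /FMle => P Q HD e1 e2; apply: Hc; exact: (H P Q HD e1 e2).
have C1 : centralizes ze th phi := @KEY S A ze Hze E HCM HA th phi Hth Hp F1.
have G2 := @GEN S A th Hth ze phi Hze C1.
have G2' := @GEN S A th Hth phi phi Hp (@C_self S A phi th Hp).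
have R2 := @syn_diag_cong S A th Hth (@Dset S A th Hth phi).
have All2 : forall x y, syn (@Dset S A th Hth phi) (Pdiag Hth x) (Pdiag Hth y).
  move=> x y; apply: (join_min R2 _ _ (topj ze Hze nze x y)).
  - move=> u v h; exact: G2.
  - move=> u v h; exact: G2'.
have F2 : FMle Hth (@cg_top S A) phi by apply: FM_of_syn => // x y _; exact: All2.
have C2 : centralizes th (@cg_top S A) phi := @KEY S A th Hth E HCM HA _ phi (top_cong A) Hp F2.
have G3 := @GEN S A _ (top_cong A) th phi Hth C2.
have G3' := @GEN S A _ (top_cong A) phi phi Hp (@C_self S A phi (@cg_top S A) Hp).
have R3 := @syn_diag_cong S A _ (top_cong A) (@Dset S A _ (top_cong A) phi).
apply: (@SD S E A HSD HA phi Hp a0 b0 nab) => x y.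
apply: (join_min R3 _ _ (topj th Hth nth x y)).
- move=> u v h; exact: G3.
- move=> u v h; exact: G3'.
Qed.


Lemma fin_ub (I : Type) (le : I -> I -> Prop) :
  (forall i j k, le i j -> le j k -> le i k) -> (forall i j, le i j \/ le j i) -> I ->
  forall n (Q : 'I_n -> I -> Prop), (forall k i j, Q k i -> le i j -> Q k j) ->
  (forall k, exists i, Q k i) -> exists i, forall k, Q k i.
Proof.
move=> Htr Htot i00 n Q Hup Hex.
suff : forall m, exists i, forall k : 'I_n, (k < m)%N -> Q k i.
  by move=> /(_ n) [i Hi]; exists i => k; apply: Hi.
elim => [|m [i IH]]; first by exists i00.
case: (ltnP m n) => hm.
- have [j Hj] := Hex (Ordinal hm).
  have Hm : forall k : 'I_n, (k < m.+1)%N -> (k < m)%N \/ k = Ordinal hm.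
    move=> k; rewrite ltnS leq_eqVlt => /orP [/eqP e|h]; last by left.
    by right; apply: val_inj.
  case: (Htot i j) => hij.
  + exists j => k /Hm [h|->] //; exact: Hup (IH k h) hij.
  + exists i => k /Hm [h|->]; [exact: IH | exact: Hup Hj hij].
- exists i => k hk; apply: IH; exact: leq_trans (ltn_ord k) hm.
Qed.

Lemma chain_proper (S : signature) (E : identities S) (A : algebra S) :
  semi_degenerate E -> models E A ->
  forall C : (A -> A -> Prop) -> Prop,
  (forall psi, C psi -> is_congruence psi) -> (forall psi, C psi -> exists x y, ~ psi x y) ->
  (forall p q, C p -> C q -> subr p q \/ subr q p) -> (exists psi, C psi) ->
  exists x y, ~ exists psi, C psi /\ psi x y.
Proof.
move=> HSD HA C Hc Hp Hch [psi0 Cpsi0].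
apply: NNPP => Hn.
have H : forall x y, exists psi, C psi /\ psi x y.
  move=> x y; apply: NNPP => h; apply: Hn; exists x, y; exact: h.
pose I := {psi : A -> A -> Prop | C psi}.
pose i00 : I := exist _ psi0 Cpsi0.
pose le := fun i j : I => subr (proj1_sig i) (proj1_sig j).
have letr : forall i j k, le i j -> le j k -> le i k.
  by move=> i j k h1 h2 x y h; apply: h2; apply: h1.
have letot : forall i j, le i j \/ le j i.
  by move=> [i hi] [j hj]; apply: Hch.
pose B := pow A I.
pose Th := fun x y : B => exists i0 : I, forall i : I, le i0 i -> proj1_sig i (x i) (y i).
have Ci : forall i : I, is_congruence (proj1_sig i) by move=> [i hi]; apply: Hc.
have HTh : is_congruence Th.
  split; [|split; [|split]].
  - move=> x; exists i00 => i _; case: (Ci i) => r _; exact: r.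
  - move=> x y [i0 h]; exists i0 => i hi; case: (Ci i) => _ [s _]; apply: s; exact: h.
  - move=> x y z [i0 h0] [i1 h1]; case: (letot i0 i1) => hl.
    + exists i1 => i hi; case: (Ci i) => _ [_ [t _]].
      apply: t (h0 i (letr _ _ _ hl hi)) (h1 i hi).
    + exists i0 => i hi; case: (Ci i) => _ [_ [t _]].
      apply: t (h0 i hi) (h1 i (letr _ _ _ hl hi)).
  - move=> f a b Hab.
    have [i0 Hi0] := @fin_ub I le letr letot i00 _
      (fun k i0 => forall i, le i0 i -> proj1_sig i (a k i) (b k i))
      (fun k i j h hij i' hi' => h i' (letr _ _ _ hij hi')) Hab.
    exists i0 => i hi; case: (Ci i) => _ [_ [_ c]]; apply: c => k; exact: Hi0.
have HQ : models E (quot Th) := models_quot HTh (@models_pow S E A I HA).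
have Hpr : forall i : I, exists p : A * A, ~ proj1_sig i p.1 p.2.
  move=> [i hi]; have [x [y h]] := Hp i hi; by exists (x, y).
pose F := fun i => proj1_sig (constructive_indefinite_description _ (Hpr i)).
have HF : forall i, ~ proj1_sig i (F i).1 (F i).2.
  move=> i; exact: (proj2_sig (constructive_indefinite_description _ (Hpr i))).
apply: (HSD _ HQ).
- exists (cls Th (fun i => (F i).1 : A)), (cls Th (fun i => (F i).2 : A)).
  move=> e; have [i0 h] := cls_inj HTh e.
  apply: (HF i0); apply: h => x y; exact.
- have [x0 _] := Hp _ Cpsi0.
  exists (cls Th (fun _ : I => x0)) => f ar Har.
  apply: (cls_eq HTh).
  case: (HTh) => _ [_ [tr c]].
  have h1 : Th (interp (fun i => @rep _ _ Th (ar i))) (interp (fun _ : 'I_(arity f) => (fun _ : I => x0) : B)).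
    apply: c => i; rewrite Har; exact: rep_cls.
  apply: (tr _ _ _ h1).
  have [psi [Cpsi hpsi]] := H (interp (fun _ : 'I_(arity f) => x0)) x0.
  exists (exist _ psi Cpsi) => i hi; exact: hi.
Qed.


Lemma prime_cg_above (S : signature) (E : identities S) (A : algebra S) :
  congruence_modular E -> semi_degenerate E -> models E A ->
  forall g : A -> A -> Prop, is_congruence g -> forall a1 b1, ~ g a1 b1 ->
  exists phi, prime_cg phi /\ subr g phi.
Proof.
move=> HCM HSD HA g Hg a1 b1 nab.
pose T := {psi : A -> A -> Prop | is_congruence psi /\ subr g psi /\ exists x y, ~ psi x y}.
pose t0 : T := exist _ g (conj Hg (conj (fun x y h => h) (ex_intro _ a1 (ex_intro _ b1 nab)))).
pose R := fun s t : T => boolp.asbool (subr (proj1_sig s) (proj1_sig t)).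
have HR : forall s t, R s t <-> subr (proj1_sig s) (proj1_sig t).
  by move=> s t; split => [/boolp.asboolP | h]; [|apply/boolp.asboolP].
have [t Ht] : exists t, classical_sets.premaximal (fun x y : T => R x y) t.
  apply: (classical_sets.ZL_preorder t0).
  - by move=> s; apply/(HR _ _).
  - move=> r s u h1 h2; apply/(HR _ _) => x y h; exact: ((proj1 (HR _ _) h2) _ _ ((proj1 (HR _ _) h1) _ _ h)).
  - move=> Ach Htot.
    case: (classic (exists s, Ach s)) => [[s0 As0]|nA]; last first.
      by exists t0 => s As; exfalso; apply: nA; exists s.
    pose C := fun psi => exists s, Ach s /\ proj1_sig s = psi.
    have Cc : forall psi, C psi -> is_congruence psi.
      move=> psi [s [_ <-]]; by case: (proj2_sig s).
    have Cp : forall psi, C psi -> exists x y, ~ psi x y.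
      move=> psi [s [_ <-]]; by case: (proj2_sig s) => _ [_ h].
    have Cch : forall p q, C p -> C q -> subr p q \/ subr q p.
      move=> p q [s [As <-]] [u [Au <-]].
      by case: (Htot s u As Au) => /(HR _ _) h; [left|right].
    have [x [y nU]] := @chain_proper S E A HSD HA C Cc Cp Cch (ex_intro _ _ (ex_intro _ s0 (conj As0 erefl))).
    pose U := fun x y => exists psi, C psi /\ psi x y.
    have CU : is_congruence U.
      split; [|split; [|split]].
      - move=> z; exists (proj1_sig s0); split; first by exists s0.
        by case: (Cc _ (ex_intro _ s0 (conj As0 erefl))) => r _; apply: r.
      - move=> u v [p [Cpp h]]; exists p; split => //.
        by case: (Cc _ Cpp) => _ [s _]; apply: s.
      - move=> u v w [p [Cpp h1]] [q [Cq h2]].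
        case: (Cch p q Cpp Cq) => hl.
        + exists q; split => //; case: (Cc _ Cq) => _ [_ [tr _]]; exact: tr _ _ _ (hl _ _ h1) h2.
        + exists p; split => //; case: (Cc _ Cpp) => _ [_ [tr _]]; exact: tr _ _ _ h1 (hl _ _ h2).
      - move=> f a0 b0 Hab.
        pose I := {psi : A -> A -> Prop | C psi}.
        pose le := fun i j : I => subr (proj1_sig i) (proj1_sig j).
        have letr : forall i j k, le i j -> le j k -> le i k.
          by move=> i j k h1 h2 u v h; apply: h2; apply: h1.
        have letot : forall i j, le i j \/ le j i by move=> [i hi] [j hj]; apply: Cch.
        have [i0 Hi0] := @fin_ub I le letr letot (exist _ _ (ex_intro _ s0 (conj As0 erefl))) _
          (fun k i => proj1_sig i (a0 k) (b0 k)) (fun k i j h hij => hij _ _ h)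
          (fun k => match Hab k with ex_intro p (conj Cpp h) => ex_intro _ (exist _ p Cpp) h end).
        exists (proj1_sig i0); split; first exact: proj2_sig i0.
        case: (Cc _ (proj2_sig i0)) => _ [_ [_ c]]; apply: c; exact: Hi0.
    have gU : subr g U.
      move=> u v h; exists (proj1_sig s0); split; first by exists s0.
      by case: (proj2_sig s0) => _ [hg _]; apply: hg.
    exists (exist _ U (conj CU (conj gU (ex_intro _ x (ex_intro _ y nU))))).
    move=> s As; apply/(HR _ _) => u v h; exists (proj1_sig s); split => //; by exists s.
exists (proj1_sig t); split; last by case: (proj2_sig t) => _ [h _].
case: (proj2_sig t) => Ct [gt pt].
apply: (@max_prime S E A HCM HSD HA _ Ct pt) => psi Cpsi hpsi ppsi.
pose s : T := exist _ psi (conj Cpsi (conj (fun u v h => hpsi _ _ (gt _ _ h)) ppsi)).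
apply: (proj1 (HR s t)); apply: (Ht s); apply: (proj2 (HR t s)); exact: hpsi.
Qed.


Section Rho.
Variables (S : signature) (A : algebra S).

Lemma rho_cong (th : A -> A -> Prop) : is_congruence (rho th).
Proof.
split; [|split; [|split]].
- move=> x p [[r _] _] _; exact: r.
- move=> x y H p hp hs; case: (hp) => [[_ [s _]] _]; apply: s; exact: H.
- move=> x y z H1 H2 p hp hs; case: (hp) => [[_ [_ [t _]]] _]; exact: t (H1 p hp hs) (H2 p hp hs).
- move=> f a0 b0 H p hp hs; case: (hp) => [[_ [_ [_ c]]] _]; apply: c => i; exact: H.
Qed.

Lemma rho_ext (th : A -> A -> Prop) : subr th (rho th).
Proof. by move=> x y h p _ hs; apply: hs. Qed.

Lemma rho_mono (th ze : A -> A -> Prop) : subr th ze -> subr (rho th) (rho ze).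
Proof. by move=> h x y H p hp hs; apply: H => // u v q; apply: hs; apply: h. Qed.

Lemma rho_releq (th ze : A -> A -> Prop) : releq th ze -> releq (rho th) (rho ze).
Proof. by move=> h x y; split; apply: rho_mono => u v; apply h. Qed.

Lemma comm_le_meet (th ze : A -> A -> Prop) : is_congruence th -> is_congruence ze ->
  subr (commutator th ze) (cg_meet th ze).
Proof.
move=> Hth Hze x y H; apply: H; first exact: meet_cong.
move=> t P a b c d Hab Hcd [h1 h2].
case: (Hth) => _ [sth [tth _]].
split.
- have E : forall u, th (eval (sel P b u) t) (eval (sel P a u) t).
    move=> u; apply: (cong_eval Hth) => k; rewrite /sel; case: (P k) => //.
    + exact: sth.
    + by case: Hth.
  apply: (tth _ _ _ (E c)); apply: (tth _ _ _ h1); apply: sth; exact: E.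
- apply: (cong_eval Hze) => k; rewrite /sel; case: (P k) => //.
  by case: Hze.
Qed.

Lemma rho_meet (th ze : A -> A -> Prop) : is_congruence th -> is_congruence ze ->
  subr (cg_meet (rho th) (rho ze)) (rho (cg_meet th ze)).
Proof.
move=> Hth Hze x y [h1 h2] p hp hs.
case: (hp) => _ [_ hpr].
have := hpr th ze Hth Hze (fun u v h => hs _ _ (comm_le_meet Hth Hze h)).
by case => h; [apply: h1 | apply: h2].
Qed.

End Rho.

Theorem proposition2p17 (S : signature) (E : identities S) :
  congruence_modular E -> semi_degenerate E ->
  forall A : algebra S, models E A -> semiprime A ->
  (Con_strongly_stone A <-> Con_quot_strongly_stone A).
Proof.
move=> HCM HSD A HA Hsp.
have rtop : forall h : A -> A -> Prop, is_congruence h -> (forall x y, rho h x y) -> forall x y, h x y.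
  move=> h Hh Hr x y; apply: NNPP => nh.
  have [phi [Pphi hphi]] := @prime_cg_above S E A HCM HSD HA h Hh x y nh.
  case: (Pphi) => _ [ntop _]; apply: ntop => u v; split => // _.
  by apply: Hr.
have rbot : forall x y, rho (@cg_bot S A) x y -> x = y by move=> x y /Hsp.
have meet_refl : forall x y : A -> A -> Prop, is_congruence x -> is_congruence y ->
    forall p q, p = q -> cg_meet x y p q.
  by move=> x y [rx _] [ry _] p q ->; split.
have annih : forall x u : A -> A -> Prop, is_congruence x -> is_congruence u ->
    (cg_equiv (cg_meet x u) (@cg_bot S A) <-> releq (cg_meet x u) (@cg_bot S A)).
  move=> x u Cx Cu; split => H.
  - intros p q; split => h.
    + by apply: rbot; apply/H; apply: rho_ext.
    + by apply: meet_refl.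
  - exact: rho_releq.
have annih2 : forall x u : A -> A -> Prop, is_congruence x -> is_congruence u ->
    releq (cg_meet x u) (@cg_bot S A) -> forall p q, cg_meet x u p q -> p = q.
  by move=> x u _ _ H p q /H.
have RE : forall e u : A -> A -> Prop, is_congruence e -> is_congruence u ->
    cg_equiv (cg_meet e u) (@cg_bot S A) -> forall p q, cg_meet (rho e) u p q -> p = q.
  move=> e u Ce Cu H p q [h1 h2]; apply: rbot; apply/H.
  apply: rho_meet => //; split => //; exact: rho_ext.
split.
- move=> HS U HU; have [e [Ce [[f [Cf [ef1 ef2]]] Hprop]]] := HS U HU.
  exists e; split => //; split.
    by exists f; split => //; split; apply: rho_releq.
  have Hee0 : forall u, U u -> releq (cg_meet e u) (@cg_bot S A).
    apply: (proj2 (Hprop e Ce)); intros p q; split; [by case | by move=> h; split].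
  have Hre : subr (rho e) e.
    have h : releq (cg_meet (rho e) e) (rho e).
      apply: (proj1 (Hprop _ (rho_cong e))) => u Uu; intros p q; split.
      + move=> hm; apply: (RE e u Ce (HU u Uu) _ _ _ hm).
        apply: rho_releq; exact: (Hee0 u Uu).
      + move=> e0; apply: meet_refl => //; [apply: rho_cong | exact: (HU u Uu)].
    by move=> p q hp; case: (proj2 (h p q) hp).
  move=> x Cx; split => H.
  + apply: rho_releq; apply: (proj1 (Hprop x Cx)) => u Uu; apply/(annih x u Cx (HU u Uu)); exact: H.
  + have sub : subr x e.
      move=> p q hx; apply: Hre.
      apply: (rho_mono (th := cg_meet x e)); first by move=> u v [].
      by apply/H; apply: rho_ext.
    have h : releq (cg_meet x e) x by intros p q; split => [[]|h]; [|split => //; apply: sub].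
    move=> u Uu; apply/(annih x u Cx (HU u Uu)); exact: (proj2 (Hprop x Cx) h).
- move=> HQ U HU; have [e [Ce [[f [Cf [ef1 ef2]]] Hprop]]] := HQ U HU.
  exists (rho e); split; first exact: rho_cong.
  split.
    exists (rho f); split; first exact: rho_cong.
    split.
    + intros p q; split => h.
      * apply: rbot; apply/ef1; exact: rho_meet.
      * apply: meet_refl => //; apply: rho_cong.
    + intros p q; split => // _.
      apply: rtop; first exact: join_cong.
      move=> u v; apply: (rho_mono (th := cg_join e f)).
      * apply: join_min; first exact: join_cong.
        - move=> a b h; apply: join_l; exact: rho_ext.
        - move=> a b h; apply: join_r; exact: rho_ext.
      * by apply/ef2; apply: rho_ext.
  have Hee : forall u, U u -> cg_equiv (cg_meet e u) (@cg_bot S A).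
    apply: (proj2 (Hprop e Ce)); apply: rho_releq => p q; split => [[]|h] //; by split.
  move=> x Cx; split => H.
  + have h := proj1 (Hprop x Cx) (fun u Uu => proj2 (annih x u Cx (HU u Uu)) (H u Uu)).
    have sub : subr x (rho e).
      move=> p q hx; apply: (rho_mono (th := cg_meet x e)); first by move=> u v [].
      by apply/h; apply: rho_ext.
    by intros p q; split => [[]|hx] //; split => //; apply: sub.
  + intros u Uu p q; split => h.
    * apply: (RE e u Ce (HU u Uu) (Hee u Uu)).
      case: h => h1 h2; split => //; by case: (H p q) => _ /(_ h1) [].
    * apply: meet_refl => //; exact: HU.
Qed.
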